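(* Let $k\ge2$, $n\ge1$, $A=\{0<1<\cdots<k-1\}$, $v\in\Gamma_{k,n}$ and $\pi=\pi(v)=\bigcup_{i}\pi_{i}$ its standard permutation of $[k^{n}]$. Let $1\le m\le n$ and $e=\varepsilon_{1}\varepsilon_{2}\cdots\varepsilon_{m}\in A^{m}$. Then for every $x\in[k^{n}]$ whose $n$-digit base-$k$ representation has $e$ as a prefix, the $m$-string of $x$ (with respect to $\pi$) is $e$. Moreover the domain of $p_{e}=\pi_{\varepsilon_{1}}\pi_{\varepsilon_{2}}\cdots\pi_{\varepsilon_{m}}$ is the interval of all $x\in[k^{n}]$ whose $n$-digit base-$k$ representation begins with $e$. In particular, for $x\in[k^{n}]$ identified with its $n$-digit base-$k$ representation, $\mathrm{dom}\,p_{x}=\{x\}$.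
   Context: $[N]=\{0<\cdots<N-1\}$. $G\subseteq A^{k}$ is the set of words of length $k$ containing each letter of $A$ exactly once, and $\Gamma_{k,n}=G^{k^{n-1}}$. Standard permutation of $w\in A^{N}$: let $f(w)$ be the letters of $w$ in nondecreasing order; for each letter $a$, $\pi_{a}$ is the unique order-preserving injective partial map on $[N]$ with domain the positions (from $0$) of $a$ in $f(w)$ and range the positions of $a$ in $w$; $\pi(w)=\bigcup_{a}\pi_{a}$. Maps compose left to right. For $x\in[k^{n}]$ and $m\ge0$ there is a unique sequence $\varepsilon_{1},\dots,\varepsilon_{m}\in A$ such that $x\cdot\pi_{\varepsilon_{1}}\cdots\pi_{\varepsilon_{m}}$ is defined; the word $\varepsilon_{1}\cdots\varepsilon_{m}$ is called the $m$-string of $x$. *)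

(* Defs.v *)
(* Letters of A = {0 < ... < k-1} are the naturals < k. *)
From mathcomp Require Import all_boot.
Set Implicit Arguments. Unset Strict Implicit. Unset Printing Implicit Defensive.

Definition inG (k : nat) (w : seq nat) : Prop :=
  size w = k /\ forall a, a < k -> count_mem a w = 1.

Definition inGamma (k n : nat) (v : seq nat) : Prop :=
  exists ws : seq (seq nat),
    [/\ size ws = k ^ n.-1, forall w, w \in ws -> inG k w & v = flatten ws].

Definition positions (a : nat) (s : seq nat) : seq nat :=
  [seq i <- iota 0 (size s) | nth 0 s i == a].

Definition fsort (w : seq nat) : seq nat := sort leq w.

(* pi_a as a partial map on [N]: the unique order-preserving injection from
   positions of a in f(w) onto positions of a in w *)
Definition pi_a (w : seq nat) (a : nat) (x : nat) : option nat :=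
  if x \in positions a (fsort w)
  then Some (nth 0 (positions a w) (index x (positions a (fsort w))))
  else None.

(* x . pi_{e_1} pi_{e_2} ... pi_{e_m}  (maps compose left to right) *)
Definition comp_path (w : seq nat) (e : seq nat) (x : nat) : option nat :=
  foldl (fun ox a => obind (pi_a w a) ox) (Some x) e.

Definition comp_def (w : seq nat) (e : seq nat) (x : nat) : Prop :=
  comp_path w e x <> None.

Definition is_mstring (k : nat) (w : seq nat) (m x : nat) (e : seq nat) : Prop :=
  [/\ size e = m, all (fun a => a < k) e, comp_def w e x &
      forall e', size e' = m -> all (fun a => a < k) e' -> comp_def w e' x -> e' = e].

Definition digits (k n x : nat) : seq nat :=
  [seq (x %/ k ^ (n.-1 - i)) %% k | i <- iota 0 n].

(* Main.v *)
Require Import Defs.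
From mathcomp Require Import all_boot zify.

Lemma perm_w k w : inG k w -> perm_eq w (iota 0 k).
Proof.
case=> sw cw.
have sub : {subset iota 0 k <= w}.
  move=> x; rewrite mem_iota add0n => /andP[_ xk].
  by rewrite -has_pred1 has_count cw.
have [_ eqi] := uniq_min_size (iota_uniq 0 k) sub (eq_leq (etrans sw (esym (size_iota 0 k)))).
have uw : uniq w by rewrite (uniq_size_uniq (iota_uniq 0 k) eqi) sw size_iota.
apply: uniq_perm; [exact: uw | exact: iota_uniq | move=> x; by rewrite eqi].
Qed.

Lemma count_flatten_const (T : eqType) (p : pred T) c (ws : seq (seq T)) :
  (forall w, w \in ws -> count p w = c) -> count p (flatten ws) = size ws * c.
Proof.
elim: ws => [|w ws IH] H //=.
rewrite count_cat H ?mem_head // IH // => u hu; apply: H; by rewrite inE hu orbT.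
Qed.

Definition Tseq K k := [seq i %/ K | i <- iota 0 (K * k)].

Lemma div_eq_iota K a : 0 < K -> [seq i %/ K | i <- iota (K * a) K] = nseq K a.
Proof.
move=> K0.
have -> : [seq i %/ K | i <- iota (K * a) K] = [seq a | i <- iota (K * a) K].
  apply/eq_in_map => i; rewrite mem_iota => /andP[h1 h2].
  apply/anti_leq; rewrite leq_divRL // -ltnS ltn_divLR //; apply/andP; split; lia.
have mc (s : seq nat) : [seq a | _ <- s] = nseq (size s) a by elim: s => //= x s ->.
by rewrite mc size_iota.
Qed.

Lemma countT K k (p : pred nat) : 0 < K -> count p (Tseq K k) = K * count p (iota 0 k).
Proof.
move=> K0; rewrite /Tseq; elim: k => [|k IH]; first by rewrite muln0.
rewrite mulnSr iotaD map_cat count_cat IH add0n div_eq_iota // count_nseq.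
rewrite -addn1 iotaD count_cat /= addn0 add0n; lia.
Qed.

Lemma sortedT K k : 0 < K -> sorted leq (Tseq K k).
Proof.
move=> K0; rewrite /Tseq sorted_map.
apply: (sub_sorted _ (iota_ltn_sorted 0 _)) => i j /= /ltnW; exact: leq_div2r.
Qed.

Lemma fsort_eq K k ws : 0 < K -> size ws = K -> (forall w, w \in ws -> inG k w) ->
  fsort (flatten ws) = Tseq K k.
Proof.
move=> K0 sws H; rewrite /fsort.
apply: (sorted_eq leq_trans anti_leq (sort_sorted leq_total _) (@sortedT K k K0)).
rewrite perm_sort; apply/permP => p.
rewrite countT // (@count_flatten_const _ p (count p (iota 0 k))) ?sws //.
move=> w hw; have hp := @perm_w k w (H w hw). exact: (permP hp).
Qed.

Lemma posT_mem K k a x : 0 < K -> (x \in positions a (Tseq K k)) = (x < K * k) && (x %/ K == a).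
Proof.
move=> K0; rewrite /positions mem_filter mem_iota /Tseq size_map size_iota add0n.
case: (ltnP x (K * k)) => h; last by rewrite !andbF.
rewrite (nth_map 0); last by rewrite size_iota.
by rewrite nth_iota // add0n leq0n !andbT.
Qed.

Lemma posT_eq K k a : 0 < K -> a < k -> positions a (Tseq K k) = iota (K * a) K.
Proof.
move=> K0 ak; rewrite /positions /Tseq size_map size_iota.
rewrite (eq_in_filter (a2 := fun i => i %/ K == a)); last first.
  move=> i; rewrite mem_iota add0n => /andP[_ h].
  by rewrite (nth_map 0) ?size_iota // nth_iota.
have -> : K * k = K * a + (K + K * (k - a.+1)) by rewrite -mulnS -mulnDr; congr (_ * _); lia.
rewrite !iotaD !filter_cat add0n.
rewrite (eq_in_filter (s := iota 0 (K * a)) (a2 := pred0)); last first.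
  move=> i; rewrite mem_iota add0n => /andP[_ h] /=.
  apply/negbTE; rewrite neq_ltn ltn_divLR // mulnC h //.
rewrite (eq_in_filter (s := iota (K * a) K) (a2 := predT)); last first.
  move=> i; rewrite mem_iota => /andP[h1 h2] /=.
  apply/eqP/anti_leq; rewrite leq_divRL // -ltnS ltn_divLR //; apply/andP; split; lia.
rewrite (eq_in_filter (s := iota (K * a + K) _) (a2 := pred0)); last first.
  move=> i; rewrite mem_iota => /andP[h1 h2] /=.
  apply/negbTE; rewrite neq_ltn; apply/orP; right; rewrite leq_divRL //; lia.
by rewrite !filter_pred0 filter_predT cats0.
Qed.

Lemma positions_cat a (s1 s2 : seq nat) :
  positions a (s1 ++ s2) = positions a s1 ++ map (addn (size s1)) (positions a s2).
Proof.
rewrite /positions size_cat iotaD filter_cat add0n; congr (_ ++ _).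
  apply: eq_in_filter => i; rewrite mem_iota add0n => /andP[_ h].
  by rewrite nth_cat h.
rewrite -{1}(addn0 (size s1)) iotaDl filter_map; congr map.
apply: eq_in_filter => i _ /=.
by rewrite nth_cat ltnNge leq_addr /= addKn.
Qed.

Lemma size_positions a (s : seq nat) : size (positions a s) = count_mem a s.
Proof.
rewrite /positions size_filter.
rewrite -[in RHS](mkseq_nth 0 s) /mkseq count_map; apply: eq_count => i //.
Qed.

Lemma positions_lt a (s : seq nat) x : x \in positions a s -> x < size s.
Proof. by rewrite /positions mem_filter mem_iota add0n => /andP[_ /andP[_ ->]]. Qed.

Lemma posv_nth k a ws j : 0 < k -> a < k -> (forall w, w \in ws -> inG k w) ->
  j < size ws -> nth 0 (positions a (flatten ws)) j %/ k = j.
Proof.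
move=> k0 ak; elim: ws j => [|w ws IH] j H //= jl.
have [sw cw] := H w (mem_head _ _).
have s1 : size (positions a w) = 1 by rewrite size_positions cw.
rewrite positions_cat nth_cat s1 sw.
case: j jl => [|j] jl /=.
  apply: divn_small; rewrite -sw; apply: (@positions_lt a).
  by apply: mem_nth; rewrite s1.
have Hr : forall u, u \in ws -> inG k u by move=> u hu; apply: H; rewrite inE hu orbT.
rewrite subn1 /= (nth_map 0); last first.
  rewrite size_positions (@count_flatten_const _ _ 1) ?muln1 // => u /Hr [_ ->] //.
rewrite -{1}(mul1n k) divnMDl // IH //.
Qed.

Lemma pi_step k K ws a x : 0 < k -> 0 < K -> size ws = K -> (forall w, w \in ws -> inG k w) ->
  match pi_a (flatten ws) a x with
  | None => ~~ ((x < K * k) && (x %/ K == a))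
  | Some y => [/\ x < K * k, x %/ K = a & y %/ k = x %% K] end.
Proof.
move=> k0 K0 sws H.
rewrite /pi_a (@fsort_eq K k ws K0 sws H) posT_mem //.
case: ifP => [/andP[xl /eqP xa]|/negbT] //.
have ak : a < k by rewrite -xa ltn_divLR // mulnC.
rewrite posT_eq //.
have idx : index x (iota (K * a) K) = x %% K.
  have xm : x %% K < K by apply: ltn_pmod.
  have xe : x = K * a + x %% K by rewrite {1}(divn_eq x K) xa mulnC.
  by rewrite {1}xe -(nth_iota 0 (K * a) xm) index_uniq ?size_iota ?iota_uniq.
rewrite idx; split => //.
apply: posv_nth => //; rewrite sws; exact: ltn_pmod.
Qed.

Lemma digitsS k n x : digits k n.+1 x = (x %/ k ^ n %% k) :: digits k n x.
Proof.
rewrite /digits /= subn0; congr (_ :: _).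
rewrite -[1]/(1 + 0) iotaDl -map_comp; apply/eq_in_map => i; rewrite mem_iota => /andP[_ h] /=.
congr (_ %/ k ^ _ %% k); lia.
Qed.

Lemma digitsSr k n x : 0 < k -> digits k n.+1 x = digits k n (x %/ k) ++ [:: x %% k].
Proof.
move=> k0; rewrite /digits -addn1 iotaD map_cat /= add0n addn1 /= subnn expn0 divn1; congr (_ ++ _).
apply/eq_in_map => i; rewrite mem_iota add0n => /andP[_ h] /=.
have -> : n - i = (n.-1 - i).+1 by lia.
by rewrite expnS divnMA.
Qed.

Lemma digits_mod k n x : 0 < k -> digits k n (x %% k ^ n) = digits k n x.
Proof.
move=> k0; elim: n x => [|n IH] x; first by [].
rewrite !digitsS -(IH (x %% k ^ n.+1)) -(IH x) modn_dvdm ?dvdn_exp2l //.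
by rewrite expnS -modn_divl modn_mod.
Qed.

Lemma size_digits k n x : size (digits k n x) = n.
Proof. by rewrite /digits size_map size_iota. Qed.

Lemma all_digits k n x : 0 < k -> all (fun a => a < k) (digits k n x).
Proof. move=> k0; apply/allP => a /mapP[i _ ->]; exact: ltn_pmod. Qed.

Lemma digits_inj k n x y : 0 < k -> x < k ^ n -> y < k ^ n -> digits k n x = digits k n y -> x = y.
Proof.
move=> k0; elim: n x y => [|n IH] x y.
  by rewrite expn0 !ltnS !leqn0 => /eqP -> /eqP ->.
move=> xl yl; rewrite !digitsS => -[h1 h2].
have dx : x %/ k ^ n < k by rewrite ltn_divLR ?expn_gt0 ?k0 // -expnS.
have dy : y %/ k ^ n < k by rewrite ltn_divLR ?expn_gt0 ?k0 // -expnS.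
have e1 : x %/ k ^ n = y %/ k ^ n by rewrite -(modn_small dx) -(modn_small dy).
have e2 : x %% k ^ n = y %% k ^ n.
  apply: IH; rewrite ?ltn_pmod ?expn_gt0 ?k0 // !digits_mod //.
by rewrite (divn_eq x (k ^ n)) (divn_eq y (k ^ n)) e1 e2.
Qed.

Arguments digits : simpl never.

Lemma foldl_none v e : foldl (fun ox a => obind (pi_a v a) ox) None e = None.
Proof. by elim: e. Qed.

Lemma comp_path_cons v a e x :
  comp_path v (a :: e) x = foldl (fun ox a => obind (pi_a v a) ox) (pi_a v a x) e.
Proof. by []. Qed.

Lemma claim k n ws : 0 < k -> size ws = k ^ n -> (forall w, w \in ws -> inG k w) ->
  forall e a x, size e <= n -> all (fun a => a < k) (a :: e) ->
  (comp_def (flatten ws) (a :: e) x <->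
   x < k ^ n * k /\ take (size e).+1 (digits k n.+1 x) = a :: e).
Proof.
move=> k0 sws H.
have K0 : 0 < k ^ n by rewrite expn_gt0 k0.
have dk : forall z, z < k ^ n * k -> z %/ k ^ n < k by move=> z; rewrite ltn_divLR // mulnC.
elim=> [|b e IH] a x hs ha.
- rewrite /comp_def /comp_path digitsS /=.
  have := @pi_step k (k ^ n) ws a x k0 K0 sws H.
  case: (pi_a _ a x) => [y [xl xa yd]|].
    split => // _; split => //; rewrite take0 modn_small ?xa // -xa; exact: dk.
  move=> hn; split => // -[xl [h1]]; move: hn; rewrite xl /= -h1 modn_small ?eqxx //; exact: dk.
- have hs' : size e <= n by apply: ltnW.
  move/andP: ha => [ak hbe].
  rewrite /comp_def comp_path_cons.
  have := @pi_step k (k ^ n) ws a x k0 K0 sws H.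
  case: (pi_a _ a x) => [y [xl xa yd]|].
    have yl : y < k ^ n * k by rewrite -ltn_divLR // yd ltn_pmod.
    have := IH b y hs' hbe; rewrite /comp_def => ->.
    rewrite (digitsS k n x) (digitsSr k n y k0) yd digits_mod // takel_cat ?size_digits //.
    rewrite -xa modn_small; last exact: dk.
    have tk : forall (h : nat) s m, take m.+1 (h :: s) = h :: take m s by [].
    rewrite tk; split.
      by move=> [_ ->].
    by move=> [_ [->]].
  rewrite foldl_none => hn; split => // -[xl]; rewrite digitsS /= => -[h1 _].
  move: hn; rewrite xl /= -h1 modn_small ?eqxx //; exact: dk.
Qed.

Theorem lemma3p7 (k n : nat) (v : seq nat) :
  2 <= k -> 1 <= n -> inGamma k n v ->
  (forall (m : nat) (e : seq nat),
      1 <= m <= n -> size e = m -> all (fun a => a < k) e ->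
      (forall x, x < k ^ n -> take m (digits k n x) = e -> is_mstring k v m x e) /\
      (forall x, comp_def v e x <-> (x < k ^ n /\ take m (digits k n x) = e))) /\
  (forall x, x < k ^ n -> forall y, comp_def v (digits k n x) y <-> y = x).
Proof.
move=> k2 n1 [ws [sws Hws ->]].
have k0 : 0 < k by apply: leq_trans k2.
case: n n1 sws => [|n] // _ sws.
rewrite /= in sws.
have C := @claim k n ws k0 sws Hws.
rewrite expnSr.
have gen : forall e x, 1 <= size e <= n.+1 -> all (fun a => a < k) e ->
    comp_def (flatten ws) e x <-> x < k ^ n * k /\ take (size e) (digits k n.+1 x) = e.
  move=> [|a e] x // /andP[_ hs] he; exact: C.
split.
  move=> m e /andP[m1 mn] se he; rewrite -se; split; last first.
    move=> x; apply: gen => //; rewrite se m1 mn //.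
  move=> x xl ht; split => //.
    by apply/(gen e x) => //; rewrite se m1 mn //.
  move=> e' se' he' hc.
  have hs : 1 <= size e' <= n.+1 by rewrite se' se m1 mn.
  have [_ h2] := (gen e' x hs he').1 hc.
  by rewrite -h2 se' ht.
move=> x xl y; rewrite gen ?size_digits ?all_digits //.
split.
  move=> [yl]; rewrite take_oversize ?size_digits // => hd; apply: (@digits_inj k n.+1 y x k0); rewrite ?expnSr //.
  move=> ->; rewrite take_oversize ?size_digits //.
by rewrite leqnn.
Qed.
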